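(* Let $m,n\ge1$. For every instance $(Q,c,d)$ of BQAP1, $$\min_{a\in N,\,b\in M} f_1(x^a,y^b)\le \mathcal{A}_1(Q,c,d)\le \max_{a\in N,\,b\in M} f_1(x^a,y^b),$$ and for every instance $(Q',c',d')$ of BQAP2, $$\min_{a\in M,\,b\in N} f_2(x^a,y^b)\le \mathcal{A}_2(Q',c',d')\le \max_{a\in M,\,b\in N} f_2(x^a,y^b),$$ where (in both cases, with the appropriate dimensions) $x^a$ is the 0-1 matrix with $x^a_{ij}=1$ iff $j=a$, and $y^b$ is the 0-1 matrix with $y^b_{ij}=1$ iff $i=b$.
   Context: $M=\{1,\dots,m\}$, $N=\{1,\dots,n\}$. BQAP1: data $Q=(q_{ijk\ell})$ ($m\times n\times m\times n$ real array), real $m\times n$ matrices $c,d$; feasible solutions are pairs $(x,y)$ of $m\times n$ 0-1 matrices with $\sum_{j=1}^n x_{ij}=1$ for all $i\in M$ and $\sum_{i=1}^m y_{ij}=1$ for all $j\in N$; objective $f_1(x,y)=\sum_{i,k\in M}\sum_{j,\ell\in N} q_{ijk\ell}x_{ij}y_{k\ell}+\sum_{i\in M,j\in N}c_{ij}x_{ij}+\sum_{i\in M,j\in N}d_{ij}y_{ij}$. For BQAP1, $x^a,y^b$ are $m\times n$ matrices with $a\in N$, $b\in M$. BQAP2: data $Q$ ($m\times m\times n\times n$ real array), real $m\times m$ matrix $c$, real $n\times n$ matrix $d$; feasible solutions are pairs $(x,y)$ with $x$ an $m\times m$ 0-1 matrix with $\sum_{j=1}^m x_{ij}=1$ for all $i\in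 M$ and $y$ an $n\times n$ 0-1 matrix with $\sum_{i=1}^n y_{ij}=1$ for all $j\in N$; objective $f_2(x,y)=\sum_{i,j\in M}\sum_{k,\ell\in N} q_{ijk\ell}x_{ij}y_{k\ell}+\sum_{i,j\in M}c_{ij}x_{ij}+\sum_{i,j\in N}d_{ij}y_{ij}$. For BQAP2, $x^a$ is $m\times m$ with $a\in M$ and $y^b$ is $n\times n$ with $b\in N$. $\mathcal{A}_1$ (resp. $\mathcal{A}_2$) denotes the arithmetic mean of $f_1$ (resp. $f_2$) over all feasible solutions of BQAP1 (resp. BQAP2). *)

(* Defs.v *)
From HB Require Import structures.
From mathcomp Require Import all_boot all_order all_algebra.
Set Implicit Arguments. Unset Strict Implicit. Unset Printing Implicit Defensive.
Import Order.TTheory GRing.Theory Num.Theory.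
Local Open Scope ring_scope.

Section Defs.
Variable R : realFieldType.

Definition rowone (p q : nat) (x : 'M[bool]_(p, q)) : bool :=
  [forall i, (\sum_(j < q) nat_of_bool (x i j))%N == 1%N].
Definition colone (p q : nat) (y : 'M[bool]_(p, q)) : bool :=
  [forall j, (\sum_(i < p) nat_of_bool (y i j))%N == 1%N].

Definition xa (p q : nat) (a : 'I_q) : 'M[bool]_(p, q) := \matrix_(i, j) (j == a).
Definition yb (p q : nat) (b : 'I_p) : 'M[bool]_(p, q) := \matrix_(i, j) (i == b).

Definition f1 (m n : nat) (Q : 'I_m -> 'I_n -> 'I_m -> 'I_n -> R)
  (c d : 'M[R]_(m, n)) (x y : 'M[bool]_(m, n)) : R :=
  \sum_(i < m) \sum_(k < m) \sum_(j < n) \sum_(l < n)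
      Q i j k l * (x i j)%:R * (y k l)%:R
  + \sum_(i < m) \sum_(j < n) c i j * (x i j)%:R
  + \sum_(i < m) \sum_(j < n) d i j * (y i j)%:R.

Definition feas1 (m n : nat) : {set 'M[bool]_(m, n) * 'M[bool]_(m, n)} :=
  [set p | rowone p.1 && colone p.2].

Definition A1 (m n : nat) (Q : 'I_m -> 'I_n -> 'I_m -> 'I_n -> R)
  (c d : 'M[R]_(m, n)) : R :=
  (\sum_(p in feas1 m n) f1 Q c d p.1 p.2) / (#|feas1 m n|)%:R.

Definition f2 (m n : nat) (Q : 'I_m -> 'I_m -> 'I_n -> 'I_n -> R)
  (c : 'M[R]_m) (d : 'M[R]_n) (x : 'M[bool]_m) (y : 'M[bool]_n) : R :=
  \sum_(i < m) \sum_(j < m) \sum_(k < n) \sum_(l < n)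
      Q i j k l * (x i j)%:R * (y k l)%:R
  + \sum_(i < m) \sum_(j < m) c i j * (x i j)%:R
  + \sum_(i < n) \sum_(j < n) d i j * (y i j)%:R.

Definition feas2 (m n : nat) : {set 'M[bool]_m * 'M[bool]_n} :=
  [set p | rowone p.1 && colone p.2].

Definition A2 (m n : nat) (Q : 'I_m -> 'I_m -> 'I_n -> 'I_n -> R)
  (c : 'M[R]_m) (d : 'M[R]_n) : R :=
  (\sum_(p in feas2 m n) f2 Q c d p.1 p.2) / (#|feas2 m n|)%:R.

Definition fmin (T : finType) (t0 : T) (F : T -> R) : R :=
  \big[Order.min/F t0]_(t : T) F t.
Definition fmax (T : finType) (t0 : T) (F : T -> R) : R :=
  \big[Order.max/F t0]_(t : T) F t.
End Defs.

(* Main.v *)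
Require Import Defs.
From HB Require Import structures.
From mathcomp Require Import all_boot all_order all_algebra.
From mathcomp Require Import ring.
Import Order.TTheory GRing.Theory Num.Theory.
Set Implicit Arguments. Unset Strict Implicit. Unset Printing Implicit Defensive.
Local Open Scope ring_scope.

Section S.
Variable R : realFieldType.

Lemma count_ffun (p q : nat) (i : 'I_p) (j : 'I_q) :
  \sum_(f : {ffun 'I_p -> 'I_q}) ((j == f i)%:R : R) = (q ^ p.-1)%:R.
Proof.
pose G (i' : 'I_p) (k : 'I_q) : R := if i' == i then (j == k)%:R else 1.
transitivity (\sum_(f : {ffun 'I_p -> 'I_q}) \prod_(i' < p) G i' (f i')).
  apply: eq_bigr => f _; rewrite (bigD1 i) //= /G eqxx big1 ?mulr1 //.
  by move=> i' /negbTE ->.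
rewrite -bigA_distr_bigA /= (bigD1 i) //= /G eqxx.
rewrite (bigD1 j) //= eqxx big1 ?addr0 ?mul1r; last first.
  by move=> k; rewrite eq_sym => /negbTE ->.
rewrite (eq_bigr (fun _ => q%:R)); last first.
  by move=> i' /negbTE ->; rewrite sumr_const card_ord.
rewrite prodr_const natrX; congr (_ ^+ _).
by rewrite cardC1 card_ord.
Qed.

Lemma sum_swap4 (A I J K L : finType) (F : A -> I -> J -> K -> L -> R) :
  \sum_a \sum_i \sum_j \sum_k \sum_l F a i j k l =
  \sum_i \sum_j \sum_k \sum_l \sum_a F a i j k l.
Proof.
rewrite exchange_big; apply: eq_bigr => i _.
rewrite exchange_big; apply: eq_bigr => j _.
rewrite exchange_big; apply: eq_bigr => k _.
exact: exchange_big.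
Qed.

Lemma sum_swap2 (A I J : finType) (F : A -> I -> J -> R) :
  \sum_a \sum_i \sum_j F a i j = \sum_i \sum_j \sum_a F a i j.
Proof.
rewrite exchange_big; apply: eq_bigr => i _.
exact: exchange_big.
Qed.

Lemma bil (A B I J K L : finType) (Q : I -> J -> K -> L -> R)
  (u : A -> I -> J -> R) (v : B -> K -> L -> R) :
  \sum_a \sum_b \sum_i \sum_j \sum_k \sum_l Q i j k l * u a i j * v b k l =
  \sum_i \sum_j \sum_k \sum_l Q i j k l * (\sum_a u a i j) * (\sum_b v b k l).
Proof.
under eq_bigr => a _ do rewrite sum_swap4.
rewrite sum_swap4.
apply: eq_bigr => i _; apply: eq_bigr => j _; apply: eq_bigr => k _;
apply: eq_bigr => l _.
rewrite mulr_sumr exchange_big; apply: eq_bigr => b _.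
rewrite mulr_sumr mulr_suml; apply: eq_bigr => a _; by [].
Qed.

Lemma lin (A B I J : finType) (c : I -> J -> R) (u : A -> I -> J -> R) :
  \sum_a \sum_(b : B) \sum_i \sum_j c i j * u a i j =
  (\sum_i \sum_j c i j * (\sum_a u a i j)) * #|B|%:R.
Proof.
under eq_bigr => a _ do rewrite sumr_const -mulr_natr.
rewrite -mulr_suml sum_swap2; congr (_ * _).
apply: eq_bigr => i _; apply: eq_bigr => j _; by rewrite mulr_sumr.
Qed.

Lemma lin' (A B K L : finType) (d : K -> L -> R) (v : B -> K -> L -> R) :
  \sum_(a : A) \sum_b \sum_k \sum_l d k l * v b k l =
  (\sum_k \sum_l d k l * (\sum_b v b k l)) * #|A|%:R.
Proof.
rewrite exchange_big /= lin //.
Qed.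

Lemma one_true (q : nat) (b : 'I_q -> bool) (j0 j : 'I_q) :
  (\sum_(k < q) nat_of_bool (b k))%N == 1%N -> b j0 -> b j = (j == j0).
Proof.
move=> /eqP hs hj0; case: (eqVneq j j0) => [->//|hne].
apply/negbTE/negP => hj.
move: hs; rewrite (bigD1 j0) //= (bigD1 j) /=; last by rewrite hne.
by rewrite hj0 hj.
Qed.

Lemma none_true (q : nat) (b : 'I_q -> bool) :
  (\sum_(k < q) nat_of_bool (b k))%N == 1%N -> (forall k, ~~ b k) -> False.
Proof.
move=> /eqP hs hn; move: hs; rewrite big1 // => k _.
by rewrite (negbTE (hn k)).
Qed.

Definition Xm p q (s : {ffun 'I_p -> 'I_q}) : 'M[bool]_(p,q) :=
  \matrix_(i,j) (j == s i).
Definition Ym r s (t : {ffun 'I_s -> 'I_r}) : 'M[bool]_(r,s) :=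
  \matrix_(k,l) (k == t l).
Arguments Xm {p q}. Arguments Ym {r s}.

Lemma rowone_reindex p q (G : 'M[bool]_(p,q.+1) -> R) :
  \sum_(x | rowone x) G x = \sum_(s : {ffun 'I_p -> 'I_q.+1}) G (Xm s).
Proof.
rewrite (reindex (@Xm p q.+1)) /=; last first.
  exists (fun x : 'M[bool]_(p,q.+1) => [ffun i => odflt ord0 [pick j | x i j]]).
    move=> s _; apply/ffunP => i; rewrite ffunE.
    case: pickP => [j|/(_ (s i))]; rewrite mxE ?eqxx //.
    by move/eqP.
  move=> x; rewrite inE => /forallP hx; apply/matrixP => i j.
  rewrite !mxE ffunE; case: pickP => [j0 hj0 /=|hn].
    by rewrite (one_true j (hx i) hj0).
  by case: (none_true (hx i) (fun k => negbT (hn k))).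
apply: eq_bigl => s; apply/forallP => i.
rewrite (bigD1 (s i)) //= !mxE eqxx big1 // => j hj.
by rewrite mxE (negbTE hj).
Qed.

Lemma colone_reindex r s (G : 'M[bool]_(r.+1,s) -> R) :
  \sum_(y | colone y) G y = \sum_(t : {ffun 'I_s -> 'I_r.+1}) G (Ym t).
Proof.
rewrite (reindex (@Ym r.+1 s)) /=; last first.
  exists (fun y : 'M[bool]_(r.+1,s) => [ffun l => odflt ord0 [pick k | y k l]]).
    move=> t _; apply/ffunP => l; rewrite ffunE.
    case: pickP => [k|/(_ (t l))]; rewrite mxE ?eqxx //.
    by move/eqP.
  move=> y; rewrite inE => /forallP hy; apply/matrixP => k l.
  rewrite !mxE ffunE; case: pickP => [k0 hk0 /=|hn].
    by rewrite (one_true (b := fun k => y k l) k (hy l) hk0).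
  by case: (none_true (b := fun k => y k l) (hy l) (fun k => negbT (hn k))).
apply: eq_bigl => t; apply/forallP => l.
rewrite (bigD1 (t l)) //= !mxE eqxx big1 // => k hk.
by rewrite mxE (negbTE hk).
Qed.

Lemma bilC (A B I J K L : finType) (Q : I -> J -> K -> L -> R)
  (u : A -> I -> J -> R) (v : B -> K -> L -> R) al be :
  (forall i j, \sum_a u a i j = al) -> (forall k l, \sum_b v b k l = be) ->
  \sum_a \sum_b \sum_i \sum_j \sum_k \sum_l Q i j k l * u a i j * v b k l =
  (\sum_i \sum_j \sum_k \sum_l Q i j k l) * al * be.
Proof.
move=> hu hv; rewrite bil -mulrA.
rewrite mulr_suml; apply: eq_bigr => i _; rewrite mulr_suml; apply: eq_bigr => j _.
rewrite mulr_suml; apply: eq_bigr => k _; rewrite mulr_suml; apply: eq_bigr => l _.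
by rewrite hu hv mulrA.
Qed.

Lemma linC (A B I J : finType) (c : I -> J -> R) (u : A -> I -> J -> R) al :
  (forall i j, \sum_a u a i j = al) ->
  \sum_a \sum_(b : B) \sum_i \sum_j c i j * u a i j =
  (\sum_i \sum_j c i j) * al * #|B|%:R.
Proof.
move=> hu; rewrite lin; congr (_ * _).
rewrite mulr_suml; apply: eq_bigr => i _; rewrite mulr_suml; apply: eq_bigr => j _.
by rewrite hu.
Qed.

Lemma linC' (A B K L : finType) (d : K -> L -> R) (v : B -> K -> L -> R) be :
  (forall k l, \sum_b v b k l = be) ->
  \sum_(a : A) \sum_b \sum_k \sum_l d k l * v b k l =
  (\sum_k \sum_l d k l) * be * #|A|%:R.
Proof.
move=> hv; rewrite lin'; congr (_ * _).
rewrite mulr_suml; apply: eq_bigr => i _; rewrite mulr_suml; apply: eq_bigr => j _.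
by rewrite hv.
Qed.

Definition g p q r s (Q : 'I_p -> 'I_q -> 'I_r -> 'I_s -> R)
  (c : 'M[R]_(p,q)) (d : 'M[R]_(r,s)) (x : 'M[bool]_(p,q))
  (y : 'M[bool]_(r,s)) : R :=
  \sum_i \sum_j \sum_k \sum_l Q i j k l * (x i j)%:R * (y k l)%:R
  + \sum_i \sum_j c i j * (x i j)%:R
  + \sum_k \sum_l d k l * (y k l)%:R.

Lemma g_sum (A B : finType) p q r s (Q : 'I_p -> 'I_q -> 'I_r -> 'I_s -> R)
  c d (X : A -> 'M[bool]_(p,q)) (Y : B -> 'M[bool]_(r,s)) al be :
  (forall i j, \sum_a ((X a i j)%:R : R) = al) ->
  (forall k l, \sum_b ((Y b k l)%:R : R) = be) ->
  \sum_a \sum_b g Q c d (X a) (Y b) =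
  (\sum_i \sum_j \sum_k \sum_l Q i j k l) * al * be
  + (\sum_i \sum_j c i j) * al * #|B|%:R
  + (\sum_k \sum_l d k l) * be * #|A|%:R.
Proof.
move=> hu hv; rewrite /g.
under eq_bigr => a _ do rewrite !big_split.
rewrite !big_split /=.
rewrite (@bilC _ _ _ _ _ _ Q (fun a i j => ((X a i j)%:R : R)) (fun b k l => ((Y b k l)%:R : R)) _ _ hu hv).
rewrite (@linC _ B _ _ c (fun a i j => ((X a i j)%:R : R)) _ hu).
by rewrite (@linC' A _ _ _ d (fun b k l => ((Y b k l)%:R : R)) _ hv).
Qed.

Lemma feas_sum p q r s (G : 'M[bool]_(p,q.+1) -> 'M[bool]_(r.+1,s) -> R) :
  \sum_(pr in [set pr : 'M[bool]_(p,q.+1) * 'M[bool]_(r.+1,s) |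
                 rowone pr.1 && colone pr.2]) G pr.1 pr.2 =
  \sum_(sg : {ffun 'I_p -> 'I_q.+1}) \sum_(t : {ffun 'I_s -> 'I_r.+1})
      G (Xm sg) (Ym t).
Proof.
rewrite (eq_bigl (fun pr => rowone pr.1 && colone pr.2)); last first.
  by move=> pr; rewrite inE.
rewrite -(pair_big_dep (fun x => rowone x) (fun _ y => colone y)) /=.
rewrite rowone_reindex; apply: eq_bigr => sg _.
exact: colone_reindex.
Qed.

Lemma avg_eq p q r s (Q : 'I_p.+1 -> 'I_q.+1 -> 'I_r.+1 -> 'I_s.+1 -> R)
  c d :
  let S := [set pr : 'M[bool]_(p.+1,q.+1) * 'M[bool]_(r.+1,s.+1) |
                 rowone pr.1 && colone pr.2] in
  (\sum_(pr in S) g Q c d pr.1 pr.2) / (#|S|)%:R =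
  (\sum_(ab : 'I_q.+1 * 'I_r.+1) g Q c d (xa p.+1 ab.1) (yb s.+1 ab.2))
    / (#|{: 'I_q.+1 * 'I_r.+1}|)%:R.
Proof.
move=> S.
have hS : (#|S|)%:R = \sum_(pr in S) (1 : R) by rewrite sumr_const.
rewrite hS /S !feas_sum.
rewrite (@g_sum _ _ _ _ _ _ Q c d _ _ ((q.+1 ^ p)%:R) ((r.+1 ^ s)%:R)); first last.
- move=> k l; rewrite -(@count_ffun _ _ l k); apply: eq_bigr => t _.
  by rewrite mxE.
- move=> i j; rewrite -(@count_ffun _ _ i j); apply: eq_bigr => t _.
  by rewrite mxE.
rewrite -(pair_bigA _ (fun (a : 'I_q.+1) (b : 'I_r.+1) => g Q c d (xa p.+1 a) (yb s.+1 b))) /=.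
rewrite (@g_sum _ _ _ _ _ _ Q c d _ _ 1 1); first last.
- move=> k l; rewrite (bigD1 k) //= !mxE eqxx big1 ?addr0 // => b hb.
  by rewrite mxE eq_sym (negbTE hb).
- move=> i j; rewrite (bigD1 j) //= !mxE eqxx big1 ?addr0 // => a ha.
  by rewrite mxE eq_sym (negbTE ha).
rewrite (feas_sum (fun _ _ => (1:R))) /=.
rewrite !sumr_const !card_ffun card_prod !card_ord.
set SQ := \sum_i _; set SC := \sum_i _; set SD := \sum_i _.
rewrite -mulr_natr !natrX natrM !exprS !mulr1.
set a := (q.+1)%:R; set b := (r.+1)%:R.
have ha : a != 0 by rewrite /a pnatr_eq0.
have hb : b != 0 by rewrite /b pnatr_eq0.
have hap : a ^+ p != 0 by rewrite expf_neq0.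
have hbs : b ^+ s != 0 by rewrite expf_neq0.
rewrite -mulr_natr natrX -/a exprS. field. have h1 : forall k : nat, (1 + k%:R : R) != 0 by move=> k; rewrite addrC natr1 pnatr_eq0.
by rewrite !h1 hap hbs.
Qed.
Lemma bmin_le (T : eqType) (r : seq T) (x0 : R) (F : T -> R) t :
  t \in r -> \big[Order.min/x0]_(i <- r) F i <= F t.
Proof.
elim: r => [//|a r IH]; rewrite in_cons big_cons => /orP [/eqP ->|ht].
  by rewrite ge_min lexx.
by rewrite ge_min IH ?orbT.
Qed.

Lemma bmax_ge (T : eqType) (r : seq T) (x0 : R) (F : T -> R) t :
  t \in r -> F t <= \big[Order.max/x0]_(i <- r) F i.
Proof.
elim: r => [//|a r IH]; rewrite in_cons big_cons => /orP [/eqP ->|ht].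
  by rewrite le_max lexx.
by rewrite le_max IH ?orbT.
Qed.

Lemma minmax (T : finType) (t0 : T) (F : T -> R) :
  fmin t0 F <= (\sum_t F t) / #|T|%:R <= fmax t0 F.
Proof.
have hn : 0 < (#|T|%:R : R) by rewrite ltr0n; apply/card_gt0P; exists t0.
apply/andP; split.
  rewrite ler_pdivlMr // mulr_natr.
  have -> : fmin t0 F *+ #|T| = \sum_(t : T) fmin t0 F by rewrite sumr_const.
  by apply: ler_sum => t _; apply: bmin_le; rewrite mem_index_enum.
rewrite ler_pdivrMr // mulr_natr.
have -> : fmax t0 F *+ #|T| = \sum_(t : T) fmax t0 F by rewrite sumr_const.
by apply: ler_sum => t _; apply: bmax_ge; rewrite mem_index_enum.
Qed.

End S.

Theorem corollary1 (R : realFieldType) (m n : nat) :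
  (forall (Q : 'I_m.+1 -> 'I_n.+1 -> 'I_m.+1 -> 'I_n.+1 -> R)
          (c d : 'M[R]_(m.+1, n.+1)),
     let F := fun ab : 'I_n.+1 * 'I_m.+1 =>
                f1 Q c d (xa m.+1 ab.1) (yb n.+1 ab.2) in
     fmin (ord0, ord0) F <= A1 Q c d <= fmax (ord0, ord0) F)
  /\
  (forall (Q : 'I_m.+1 -> 'I_m.+1 -> 'I_n.+1 -> 'I_n.+1 -> R)
          (c : 'M[R]_m.+1) (d : 'M[R]_n.+1),
     let F := fun ab : 'I_m.+1 * 'I_n.+1 =>
                f2 Q c d (xa m.+1 ab.1) (yb n.+1 ab.2) in
     fmin (ord0, ord0) F <= A2 Q c d <= fmax (ord0, ord0) F).
Proof.
split.
- move=> Q c d.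
  set F := (fun ab : 'I_n.+1 * 'I_m.+1 => f1 Q c d (xa m.+1 ab.1) (yb n.+1 ab.2)).
  cbv zeta.
  have hf : forall x y, f1 Q c d x y = g Q c d x y.
    move=> x y; rewrite /f1 /g; congr (_ + _ + _).
    by apply: eq_bigr => i _; exact: exchange_big.
  have -> : A1 Q c d = (\sum_t F t) / #|{: 'I_n.+1 * 'I_m.+1}|%:R.
    rewrite /A1 /F.
    under eq_bigr do rewrite hf.
    under [X in _ = X / _]eq_bigr do rewrite hf.
    exact: avg_eq.
  exact: minmax.
- move=> Q c d.
  set F := (fun ab : 'I_m.+1 * 'I_n.+1 => f2 Q c d (xa m.+1 ab.1) (yb n.+1 ab.2)).
  cbv zeta.
  have -> : A2 Q c d = (\sum_t F t) / #|{: 'I_m.+1 * 'I_n.+1}|%:R.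
    exact: avg_eq.
  exact: minmax.
Qed.
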